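(* Let $c$ be a natural number and let $\phi$ be a function that assigns to every $m$-input/$m$-output conditional distribution $p(y^{(1)},\dots,y^{(m)}\mid x^{(1)},\dots,x^{(m)})$ on finite sets, together with a set $\Psi$ of distributions on its input alphabet $\mathcal{X}^{(1)}\times\cdots\times\mathcal{X}^{(m)}$, a subset $\phi(p,\Psi)\subseteq\mathbb{R}_+^c$, and suppose $\phi$ satisfies: (1) If $p(y^{(1)}y'^{(1)},\dots,y^{(m)}y'^{(m)}\mid x^{(1)},\dots,x^{(m)})=p(y^{(1)},\dots,y^{(m)}\mid x^{(1)},\dots,x^{(m)})\,p(y'^{(1)},\dots,y'^{(m)}\mid x'^{(1)},\dots,x'^{(m)})$ where each $x'^{(i)}\in\mathcal{X}'^{(i)}$ is a deterministic function of $y^{(i)}$, then for every input distribution $q(x^{(1)},\dots,x^{(m)})$ and every set $\Psi$ of distributions on $\mathcal{X}'^{(1)}\times\cdots\times\mathcal{X}'^{(m)}$ containing the distribution of $(X'^{(1)},\dots,X'^{(m)})$ induced by $q$ and $p(y\mid x)$, \[\phi\big(p(y^{(1)}y'^{(1)},\dots,y^{(m)}y'^{(m)}\mid x),\{q\}\big)\subseteq\phi\big(p(y\mid x),\{q\}\big)\oplus\phi\big(p(y'\mid x'),\Psi\big);\] (2) If $p(y^{(1)},\dots,y^{(m)}\mid x^{(1)},\dots,x^{(m)})=\prod_{i=1}^m\mathbf{1}[y^{(i)}=x^{(i)}]$, then $\phi(p,\{q\})=\{0\}$ for every input distribution $q$; (3) If $p(z^{(1)},\dots,z^{(m)},y^{(1)},\dots,y^{(m)}\mid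 x)=p(y^{(1)},\dots,y^{(m)}\mid x)\prod_{i=1}^m p(z^{(i)}\mid y^{(i)})$, then for every input distribution $q$, $\phi(p(z^{(1)},\dots,z^{(m)}\mid x),\{q\})\subseteq\phi(p(y^{(1)},\dots,y^{(m)}\mid x),\{q\})$. Then for every multiterminal network $q(y^{(1)},\dots,y^{(m)}\mid x^{(1)},\dots,x^{(m)})$, every source $p(w^{(1)},\dots,w^{(m)})$, functions $f^{(i)}$, distortion functions $\Delta^{(i)}$ and levels $D^{(i)}$, every $\epsilon>0$, every $(n)$-code with $\mathbb{E}[\Delta^{(i)}_n(\widehat{M}^{(i)}_{1:n},M^{(i)}_{1:n})]\le D^{(i)}+\epsilon$ for all $i\in[m]$, and every permissible set $\Psi$ of input distributions, \[ \phi\Big(p(\widehat{m}^{(1)}_{1:n},\dots,\widehat{m}^{(m)}_{1:n}\mid w^{(1)}_{1:n},\dots,w^{(m)}_{1:n}),\ \{p(w^{(1)}_{1:n},\dots,w^{(m)}_{1:n})\}\Big)\subseteq n\times\mathrm{ConvexHull}\Big(\phi\big(q(y^{(1)},\dots,y^{(m)}\mid x^{(1)},\dots,x^{(m)}),\Psi\big)\Big), \] where $W^{(i)}_{1:n}$ are the source blocks observed at the nodes and $\widehat{M}^{(i)}_{1:n}=\vartheta^{(i)}(W^{(i)}_{1:n},Y^{(i)}_{1:n})$ are the reconstructions produced by the code.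
   Context: All alphabets are finite; $[k]=\{1,\dots,k\}$. For $K,L\subseteq\mathbb{R}_+^c$, $K\oplus L=\{v_1+v_2:v_1\in K,v_2\in L\}$ (Minkowski sum) and $r\times K=\{rv:v\in K\}$. A GMN is a conditional distribution $q(y^{(1)},\dots,y^{(m)}\mid x^{(1)},\dots,x^{(m)})$. Node $i$ observes i.i.d. repetitions of $W^{(i)}$, jointly distributed as $p(w^{(1)},\dots,w^{(m)})$, and wants $M^{(i)}=f^{(i)}(W^{(1)},\dots,W^{(m)})$; $\Delta^{(i)}$ is a distortion function with $\Delta^{(i)}(a,a)=0$ and $\Delta^{(i)}_n(m_{1:n},m'_{1:n})=\frac1n\sum_k\Delta^{(i)}(m_k,m'_k)$. An $(n)$-code consists of encoders $\zeta^{(i)}_1:(\mathcal{W}^{(i)})^n\to\mathcal{X}^{(i)}$, $\zeta^{(i)}_k:(\mathcal{W}^{(i)})^n\times(\mathcal{Y}^{(i)})^{k-1}\to\mathcal{X}^{(i)}$ ($2\le k\le n$) and decoders $\vartheta^{(i)}:(\mathcal{W}^{(i)})^n\times(\mathcal{Y}^{(i)})^n\to(\mathcal{M}^{(i)})^n$. In operation, the source letters are i.i.d. across time, $X^{(i)}_k=\zeta^{(i)}_k(W^{(i)}_{1:n},Y^{(i)}_{1:k-1})$, and given all past variables and the current inputs, $(Y^{(1)}_k,\dots,Y^{(m)}_k)$ is drawn from $q(\cdot\mid X^{(1)}_k,\dots,X^{(m)}_k)$; $M^{(i)}_k=f^{(i)}(W^{(1)}_k,\dots,W^{(m)}_k)$.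 A permissible set $\Psi$ is a set of joint distributions on $\mathcal{X}^{(1)}\times\cdots\times\mathcal{X}^{(m)}$ that, for the given network and source, contains the joint distribution of the channel inputs $(X^{(1)}_k,\dots,X^{(m)}_k)$ at every time $k$ for any code. *)

(* Defs.v *)
From HB Require Import structures.
From mathcomp Require Import all_boot all_order all_algebra.
From mathcomp Require Import boolp classical_sets.
Set Implicit Arguments. Unset Strict Implicit. Unset Printing Implicit Defensive.
Import Order.TTheory GRing.Theory Num.Theory.
Local Open Scope ring_scope.
Local Open Scope classical_set_scope.

Notation joint A := ({dffun forall i, A i}) (only parsing).

Definition pairF (m : nat) (A B : 'I_m -> finType) : 'I_m -> finType :=
  fun i => (A i * B i)%type.

Definition blockF (m n : nat) (A : 'I_m -> finType) : 'I_m -> finType :=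
  fun i => {ffun 'I_n -> A i}.

Section Probability.
Variable R : numDomainType.

Definition is_dist (T : finType) (d : {ffun T -> R}) : Prop :=
  (forall t, 0 <= d t) /\ \sum_(t : T) d t = 1.

Definition chan (A B : finType) := {ffun A -> {ffun B -> R}}.

Definition is_chan (A B : finType) (k : chan A B) : Prop :=
  forall a, is_dist (k a).
End Probability.

Section VecSets.
Variables (R : numDomainType) (c : nat).

Definition nonneg_vec (v : 'rV[R]_c) : Prop := forall j, 0 <= v ord0 j.

Definition msum (K L : set 'rV[R]_c) : set 'rV[R]_c :=
  [set v | exists v1 v2, K v1 /\ L v2 /\ v = v1 + v2].

Definition vscale (r : R) (K : set 'rV[R]_c) : set 'rV[R]_c :=
  [set v | exists2 u, K u & v = r *: u].

Definition conv_hull (K : set 'rV[R]_c) : set 'rV[R]_c :=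
  [set v | exists (k : nat) (w : 'I_k -> R) (u : 'I_k -> 'rV[R]_c),
     (forall j, 0 <= w j) /\ \sum_(j < k) w j = 1 /\
     (forall j, K (u j)) /\ v = \sum_(j < k) w j *: u j].
End VecSets.

Section PhiAxioms.
Variables (R : numDomainType) (m c : nat).

Definition phi_type :=
  forall X Y : 'I_m -> finType,
    chan R (joint X) (joint Y) -> set {ffun joint X -> R} -> set 'rV[R]_c.

Variable phi : phi_type.

Definition phi_nonneg : Prop :=
  forall (X Y : 'I_m -> finType) (k : chan R (joint X) (joint Y))
         (Psi : set {ffun joint X -> R}),
    phi k Psi `<=` @nonneg_vec R c.

Definition gmap (Y X' : 'I_m -> finType) (g : forall i, Y i -> X' i)
  (y : joint Y) : joint X' := finfun (fun i => g i (y i)).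

Definition fstJ (Y Y' : 'I_m -> finType) (yy : joint (pairF Y Y')) : joint Y :=
  finfun (fun i => (yy i).1).
Definition sndJ (Y Y' : 'I_m -> finType) (yy : joint (pairF Y Y')) : joint Y' :=
  finfun (fun i => (yy i).2).

Definition tensor_chan (X Y X' Y' : 'I_m -> finType)
  (k : chan R (joint X) (joint Y)) (k' : chan R (joint X') (joint Y'))
  (g : forall i, Y i -> X' i) : chan R (joint X) (joint (pairF Y Y')) :=
  [ffun x => [ffun yy => k x (fstJ yy) * k' (gmap g (fstJ yy)) (sndJ yy)]].

Definition induced_dist (X Y X' : 'I_m -> finType)
  (qd : {ffun joint X -> R}) (k : chan R (joint X) (joint Y))
  (g : forall i, Y i -> X' i) : {ffun joint X' -> R} :=
  [ffun x' => \sum_(x : joint X) qd x *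
                \sum_(y : joint Y) k x y * (gmap g y == x')%:R].

Definition phi_prop1 : Prop :=
  forall (X Y X' Y' : 'I_m -> finType)
         (k : chan R (joint X) (joint Y)) (k' : chan R (joint X') (joint Y'))
         (g : forall i, Y i -> X' i),
    is_chan k -> is_chan k' ->
    forall (qd : {ffun joint X -> R}), is_dist qd ->
    forall (Psi : set {ffun joint X' -> R}),
      (forall d, Psi d -> is_dist d) ->
      Psi (induced_dist qd k g) ->
      phi (tensor_chan k k' g) [set qd] `<=` msum (phi k [set qd]) (phi k' Psi).

Definition id_chan (X : 'I_m -> finType) : chan R (joint X) (joint X) :=
  [ffun x : joint X => [ffun y : joint X => \prod_(i < m) (y i == x i)%:R]].

Definition phi_prop2 : Prop :=
  forall (X : 'I_m -> finType) (qd : {ffun joint X -> R}), is_dist qd ->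
    phi (id_chan X) [set qd] = [set 0].

Definition post_chan (X Y Z : 'I_m -> finType)
  (k : chan R (joint X) (joint Y)) (r : forall i, chan R (Y i) (Z i)) :
  chan R (joint X) (joint Z) :=
  [ffun x : joint X => [ffun z : joint Z => \sum_(y : joint Y) k x y * \prod_(i < m) r i (y i) (z i)]].

Definition phi_prop3 : Prop :=
  forall (X Y Z : 'I_m -> finType)
         (k : chan R (joint X) (joint Y)) (r : forall i, chan R (Y i) (Z i)),
    is_chan k -> (forall i, is_chan (r i)) ->
    forall (qd : {ffun joint X -> R}), is_dist qd ->
      phi (post_chan k r) [set qd] `<=` phi k [set qd].
End PhiAxioms.

Section Network.
Variables (R : numDomainType) (m : nat).
Variables (W X Y M : 'I_m -> finType).
Variables (p : {ffun joint W -> R}) (q : chan R (joint X) (joint Y)).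

(* encoders zeta^(i)_k (W^(i)_{1:n}, Y^(i)_{1:n}) ; causality below says
   that zeta^(i)_k only depends on Y^(i)_{1:k-1} *)
Definition encoders (n : nat) :=
  forall i : 'I_m, 'I_n -> {ffun 'I_n -> W i} -> {ffun 'I_n -> Y i} -> X i.

Definition causal (n : nat) (enc : encoders n) : Prop :=
  forall (i : 'I_m) (k : 'I_n) (w : {ffun 'I_n -> W i}) (y y' : {ffun 'I_n -> Y i}),
    (forall j : 'I_n, (j < k)%N -> y j = y' j) -> enc i k w y = enc i k w y'.

Definition decoders (n : nat) :=
  forall i : 'I_m, {ffun 'I_n -> W i} -> {ffun 'I_n -> Y i} -> {ffun 'I_n -> M i}.

Definition blk (A : 'I_m -> finType) (n : nat) (s : {ffun 'I_n -> joint A})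
  (i : 'I_m) : {ffun 'I_n -> A i} := [ffun k => s k i].

Definition unblk (A : 'I_m -> finType) (n : nat) (b : joint (blockF n A)) :
  {ffun 'I_n -> joint A} := [ffun k => finfun (fun i => b i k)].

Definition xin (n : nat) (enc : encoders n) (wb : {ffun 'I_n -> joint W})
  (yb : {ffun 'I_n -> joint Y}) (k : 'I_n) : joint X :=
  finfun (fun i => enc i k (blk wb i) (blk yb i)).

Definition out_prob (n : nat) (enc : encoders n) (wb : {ffun 'I_n -> joint W})
  (yb : {ffun 'I_n -> joint Y}) : R :=
  \prod_(k < n) q (xin enc wb yb k) (yb k).

Definition proc_prob (n : nat) (enc : encoders n) (wb : {ffun 'I_n -> joint W})
  (yb : {ffun 'I_n -> joint Y}) : R :=
  (\prod_(k < n) p (wb k)) * out_prob enc wb yb.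

Definition input_dist (n : nat) (enc : encoders n) (k : 'I_n) :
  {ffun joint X -> R} :=
  [ffun x => \sum_(wb : {ffun 'I_n -> joint W}) \sum_(yb : {ffun 'I_n -> joint Y})
               proc_prob enc wb yb * (xin enc wb yb k == x)%:R].

Definition permissible (Psi : set {ffun joint X -> R}) : Prop :=
  (forall d, Psi d -> is_dist d) /\
  forall (n : nat) (enc : encoders n), causal enc ->
    forall k : 'I_n, Psi (input_dist enc k).

Definition block_source (n : nat) : {ffun joint (blockF n W) -> R} :=
  [ffun wn => \prod_(k < n) p (unblk wn k)].

Definition recon (n : nat) (dec : decoders n) (wn : joint (blockF n W))
  (yb : {ffun 'I_n -> joint Y}) : joint (blockF n M) :=
  finfun (fun i => dec i (wn i) (blk yb i)).

Definition code_chan (n : nat) (enc : encoders n) (dec : decoders n) :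
  chan R (joint (blockF n W)) (joint (blockF n M)) :=
  [ffun wn => [ffun mh => \sum_(yb : {ffun 'I_n -> joint Y})
      out_prob enc (unblk wn) yb * (recon dec wn yb == mh)%:R]].

Definition exp_distortion (n : nat) (enc : encoders n) (dec : decoders n)
  (f : forall i, joint W -> M i) (Delta : forall i, M i -> M i -> R)
  (i : 'I_m) : R :=
  \sum_(wn : joint (blockF n W)) block_source n wn *
    \sum_(mh : joint (blockF n M)) code_chan enc dec wn mh *
      (n%:R^-1 * \sum_(k < n) Delta i (mh i k) (f i (unblk wn k))).
End Network.

(* Main.v *)
Require Import Defs.
From HB Require Import structures.
From mathcomp Require Import all_boot all_order all_algebra.
From mathcomp Require Import boolp classical_sets reals.
Import Order.TTheory GRing.Theory Num.Theory.
Local Open Scope ring_scope.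
Set Implicit Arguments. Unset Strict Implicit. Unset Printing Implicit Defensive.

Section Gen.
Variables (R : realType) (m : nat).

Definition pj (A B : 'I_m -> finType) (a : {dffun forall i, A i})
  (b : {dffun forall i, B i}) : {dffun forall i, pairF A B i} :=
  @finfun 'I_m (fun i => pairF A B i) (fun i => (a i, b i)).

Lemma fst_pj A B a b : fstJ (@pj A B a b) = a.
Proof. by apply/ffunP => i; rewrite !ffunE. Qed.
Lemma snd_pj A B a b : sndJ (@pj A B a b) = b.
Proof. by apply/ffunP => i; rewrite !ffunE. Qed.
Lemma pj_fst A B z : pj (@fstJ m A B z) (sndJ z) = z.
Proof. by apply/ffunP => i; rewrite !ffunE; case: (z i). Qed.

Lemma sum_pair A B (F : {dffun forall i, pairF A B i} -> R) :
  \sum_z F z = \sum_(a : {dffun forall i, A i}) \sum_(b : {dffun forall i, B i}) F (pj a b).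
Proof.
rewrite pair_big /=.
rewrite (reindex (fun ab : {dffun forall i, A i} * {dffun forall i, B i} => pj ab.1 ab.2)) //.
exists (fun z => (fstJ z, sndJ z)) => [[a b] _|z _] /=; first by rewrite fst_pj snd_pj.
by rewrite pj_fst.
Qed.

Lemma prod_nat_bool (I : finType) (b : I -> bool) :
  \prod_i ((b i)%:R : R) = ([forall i, b i])%:R.
Proof.
case: (boolP [forall i, b i]) => [/forallP H|H].
  by rewrite big1 // => i _; rewrite H.
move: H; rewrite negb_forall => /existsP [i Hi].
by rewrite (bigD1 i) //= (negbTE Hi) mul0r.
Qed.

Lemma dist_inhabited (T : finType) (d : {ffun T -> R}) : is_dist d -> exists t : T, true.
Proof.
case=> _ Hs; case: (pickP (fun _ : T => true)) => [t _|H]; first by exists t.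
by move: Hs; rewrite big_pred0 // => /eqP; rewrite eq_sym oner_eq0.
Qed.

Variable n : nat.
Definition upd (T : finType) (yb : {ffun 'I_n -> T}) (k : 'I_n) (y : T) :=
  [ffun j => if j == k then y else yb j].

Lemma split_sum (T : finType) (P : pred {ffun 'I_n -> T}) (k : 'I_n) (t0 : T) F :
  (forall yb y, P (upd yb k y) = P yb) ->
  \sum_(yb | P yb) (F yb : R) = \sum_(yb | P yb && (yb k == t0)) \sum_y F (upd yb k y).
Proof.
move=> HP.
rewrite (partition_big (fun yb : {ffun 'I_n -> T} => yb k) (fun _ => true)) //.
rewrite exchange_big /=; apply: eq_bigr => y _.
rewrite (reindex_onto (fun yb => upd yb k y) (fun yb => upd yb k t0)).
  apply: eq_bigl => yb; rewrite HP ffunE eqxx eqxx andbT; congr (_ && _).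
  apply/eqP/eqP => [<-|H]; first by rewrite ffunE eqxx.
  by apply/ffunP => j; rewrite !ffunE; case: eqP => // ->.
move=> yb /andP[_ /eqP H]; apply/ffunP => j; rewrite !ffunE.
by case: eqP => // ->; rewrite H.
Qed.
End Gen.
Section Main.
Variables (R : realType) (m : nat) (W X Y : 'I_m -> finType).
Variable q : chan R {dffun forall i, X i} {dffun forall i, Y i}.
Variable n' : nat.
Local Notation n := n'.+1.
Variable enc : encoders W X Y n.
Hypothesis Henc : causal enc.
Variable y0 : {dffun forall i, Y i}.

Fixpoint Z (k : nat) : 'I_m -> finType :=
  if k is k'.+1 then pairF (Z k') Y else blockF n W.

Fixpoint wpart (k : nat) : forall i, Z k i -> {ffun 'I_n -> W i} :=
  match k return forall i, Z k i -> {ffun 'I_n -> W i} with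
  | 0 => fun i z => z
  | k'.+1 => fun i z => @wpart k' i z.1
  end.

Fixpoint ypart (k : nat) : forall i, Z k i -> seq (Y i) :=
  match k return forall i, Z k i -> seq (Y i) with
  | 0 => fun i z => [::]
  | k'.+1 => fun i z => rcons (@ypart k' i z.1) z.2
  end.

Definition yblk k i (z : Z k i) : {ffun 'I_n -> Y i} :=
  [ffun j : 'I_n => nth (y0 i) (ypart z) j].

Definition g k i (z : Z k i) : X i := @enc i (inord k) (wpart z) (yblk z).

Fixpoint chain (k : nat) : chan R {dffun forall i, blockF n W i} {dffun forall i, Z k i} :=
  match k return chan R {dffun forall i, blockF n W i} {dffun forall i, Z k i} with
  | 0 => id_chan R (blockF n W)
  | k'.+1 => tensor_chan (chain k') q (@g k')
  end.

Fixpoint st (k : nat) (wn : {dffun forall i, blockF n W i})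
   (yb : {ffun 'I_n -> {dffun forall i, Y i}}) : {dffun forall i, Z k i} :=
  match k return {dffun forall i, Z k i} with
  | 0 => wn
  | k'.+1 => pj (st k' wn yb) (yb (inord k'))
  end.


Hypothesis Hq : is_chan q.
Local Notation YB := {ffun 'I_n -> {dffun forall i, Y i}}.
Local Notation WN := {dffun forall i, blockF n W i}.

Lemma ord_neq (a b : 'I_n) : (a < b)%N -> (a == b) = false.
Proof. by move=> H; apply/eqP => E; rewrite E ltnn in H. Qed.

Lemma xin_dep wb (yb yb' : YB) (j : 'I_n) :
  (forall l : 'I_n, (l < j)%N -> yb l = yb' l) -> xin enc wb yb j = xin enc wb yb' j.
Proof.
move=> H; apply/ffunP => i; rewrite !ffunE; apply: Henc => l Hl.
by rewrite !ffunE H.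
Qed.

Lemma xin_upd wb (yb : YB) (kk : 'I_n) y (j : 'I_n) :
  (j <= kk)%N -> xin enc wb (upd yb kk y) j = xin enc wb yb j.
Proof.
move=> H; apply: xin_dep => l Hl; rewrite ffunE ord_neq //.
exact: leq_trans Hl H.
Qed.

Lemma blk_unblk (A : 'I_m -> finType) (wn : {dffun forall i, blockF n A i}) i :
  blk (unblk wn) i = wn i.
Proof. by apply/ffunP => l; rewrite !ffunE. Qed.

Lemma wpart_st k (wn : WN) (yb : YB) i : wpart (st k wn yb i) = wn i.
Proof. elim: k => [|k IH] //=; rewrite ffunE /=; exact: IH. Qed.

Lemma ypart_st k (wn : WN) (yb : YB) i : ypart (st k wn yb i) = [seq yb (inord j) i | j <- iota 0 k].
Proof.
elim: k => [|k IH] //.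
have E : iota 0 k.+1 = rcons (iota 0 k) k by rewrite -cats1 -[k.+1]addn1 iotaD.
transitivity (rcons (ypart (st k wn yb i)) (yb (inord k) i)); first by rewrite /= ffunE.
by rewrite IH E map_rcons.
Qed.

Lemma yblk_st k (wn : WN) (yb : YB) i (j : 'I_n) : (j < k)%N -> yblk (st k wn yb i) j = yb j i.
Proof.
move=> Hj; rewrite ffunE ypart_st (nth_map 0) ?size_iota //.
by rewrite nth_iota // add0n inord_val.
Qed.

Lemma st_dep k (wn : WN) (yb yb' : YB) : (k <= n)%N ->
  (forall l : 'I_n, (l < k)%N -> yb l = yb' l) -> st k wn yb = st k wn yb'.
Proof.
elim: k => [//|k IH] Hk H /=.
rewrite (IH (ltnW Hk)); last by move=> l Hl; apply: H; exact: ltnW.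
by rewrite H // inordK.
Qed.

Lemma gmap_st k (wn : WN) (yb : YB) : (k < n)%N ->
  gmap (@g k) (st k wn yb) = xin enc (unblk wn) yb (inord k).
Proof.
move=> Hk; apply/ffunP => i; rewrite !ffunE /g wpart_st blk_unblk.
apply: Henc => l Hl; rewrite inordK // in Hl.
by rewrite yblk_st // ffunE.
Qed.

Definition P k (yb : {ffun 'I_n -> {dffun forall i, Y i}}) :=
  [forall j : 'I_n, (k <= j)%N ==> (yb j == y0)].

Definition Q k wb (yb : {ffun 'I_n -> {dffun forall i, Y i}}) : R :=
  \prod_(j < n | (j < k)%N) q (xin enc wb yb j) (yb j).

Lemma P_upd k (kk : 'I_n) (yb : YB) y : (kk < k)%N -> P k (upd yb kk y) = P k yb.
Proof.
move=> H; apply: eq_forallb => j; rewrite ffunE; case: (j =P kk) => [->|//].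
by rewrite leqNgt H.
Qed.

Lemma P_S k (yb : YB) : (k < n)%N -> P k.+1 yb && (yb (inord k) == y0) = P k yb.
Proof.
move=> Hk; apply/idP/idP.
  move=> /andP[/forallP H /eqP E]; apply/forallP => j; apply/implyP => Hj.
  rewrite leq_eqVlt in Hj; case/orP: Hj => [/eqP Ej|Hj].
    have -> : j = inord k by apply/val_inj; rewrite /= inordK.
    by rewrite E.
  exact: (implyP (H j) Hj).
move=> /forallP H; apply/andP; split.
  apply/forallP => j; apply/implyP => Hj; exact: (implyP (H j) (ltnW Hj)).
by apply: (implyP (H (inord k))); rewrite inordK.
Qed.

Lemma P0 (yb : YB) : P 0 yb = (yb == [ffun => y0]).
Proof.
apply/forallP/eqP => [H|->]; last by move=> j; rewrite ffunE eqxx.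
apply/ffunP => j; rewrite ffunE; exact/eqP/(implyP (H j) (leq0n j)).
Qed.

Lemma Pn (yb : YB) : P n yb.
Proof. by apply/forallP => j; rewrite leqNgt ltn_ord. Qed.

Lemma Q0 wb (yb : YB) : Q 0 wb yb = 1.
Proof. by rewrite /Q big_pred0 // => j; rewrite ltn0. Qed.

Lemma Q_S k wb (yb : YB) : (k < n)%N ->
  Q k.+1 wb yb = Q k wb yb * q (xin enc wb yb (inord k)) (yb (inord k)).
Proof.
move=> Hk; rewrite /Q (bigD1 (inord k)) /=; last by rewrite inordK.
rewrite mulrC; congr (_ * _); apply: eq_bigl => j.
have -> : (j != inord k) = (val j != k) by rewrite -(inj_eq val_inj) /= inordK.
by rewrite ltnS ltn_neqAle andbC.
Qed.

Lemma Q_upd k wb (yb : YB) (kk : 'I_n) y : (k <= kk)%N -> Q k wb (upd yb kk y) = Q k wb yb.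
Proof.
move=> H; apply: eq_bigr => j Hj.
have Hjk : (j < kk)%N by exact: leq_trans Hj H.
rewrite (xin_upd _ _ _ (ltnW Hjk)) ffunE (ord_neq Hjk).
by [].
Qed.

Lemma T_lem wb (H : {ffun 'I_n -> {dffun forall i, Y i}} -> R) d : forall k, (k + d = n)%N ->
  (forall yb yb' : YB, (forall l : 'I_n, (l < k)%N -> yb l = yb' l) -> H yb = H yb') ->
  \sum_(yb | P k yb) Q k wb yb * H yb = \sum_yb out_prob q enc wb yb * H yb.
Proof.
elim: d => [|d IH] k Hkd HH.
  rewrite addn0 in Hkd; subst k.
  rewrite (eq_bigl xpredT); last by move=> yb; rewrite Pn.
  apply: eq_bigr => yb _; congr (_ * _); apply: eq_bigl => j; by rewrite ltn_ord.
have Hk : (k < n)%N by rewrite -Hkd addnS ltnS leq_addr.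
rewrite -(IH k.+1); first last.
- by move=> yb yb' E; apply: HH => l Hl; apply: E; exact: ltnW.
- by rewrite addSnnS.
rewrite [RHS](@split_sum R n _ (P k.+1) (inord k) y0); last first.
  by move=> yb y; rewrite P_upd // inordK.
rewrite [RHS](eq_bigl (P k)); last by move=> yb; rewrite P_S.
apply: eq_bigr => yb _.
have Hkk : ((inord k : 'I_n) : nat) = k := inordK Hk.
transitivity (\sum_y Q k wb yb * H yb * q (xin enc wb yb (inord k)) y).
  by rewrite -big_distrr /= (Hq _).2 mulr1.
apply: eq_bigr => y _.
have Hle : (k <= (inord k : 'I_n))%N by rewrite (inordK Hk).
rewrite (Q_S _ _ Hk) (Q_upd _ _ _ Hle) (xin_upd _ _ _ (leqnn _)) ffunE eqxx.
rewrite (HH (upd yb (inord k) y) yb); first by rewrite mulrAC.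
move=> l Hl; rewrite ffunE ord_neq //; by rewrite (inordK Hk).
Qed.

Lemma S_lem k : (k <= n)%N -> forall (wn : WN) (G : {dffun forall i, Z k i} -> R),
  \sum_z chain k wn z * G z = \sum_(yb | P k yb) Q k (unblk wn) yb * G (st k wn yb).
Proof.
elim: k => [|k IH] Hk wn G.
  rewrite [RHS](big_pred1 [ffun=> y0]); last by move=> yb; rewrite P0.
  rewrite Q0 mul1r /=.
  rewrite (bigD1 wn) //= big1 ?addr0.
    rewrite !ffunE prod_nat_bool.
    have -> : [forall i, wn i == wn i] by apply/forallP => i.
    by rewrite mul1r.
  move=> z Hz; rewrite !ffunE prod_nat_bool.
  have -> : [forall i, z i == wn i] = false.
    apply/negbTE/negP => /forallP H; move/negP: Hz; apply.
    by apply/eqP/ffunP => i; apply/eqP; exact: H.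
  by rewrite mul0r.
have Hk' : (k < n)%N := Hk.
have Hkk : (k <= (inord k : 'I_n))%N by rewrite (inordK Hk').
rewrite sum_pair.
transitivity (\sum_a chain k wn a *
   (\sum_b q (gmap (@g k) a) b * G (pj a b))).
  apply: eq_bigr => a _; rewrite big_distrr /=; apply: eq_bigr => b _.
  by rewrite /= !ffunE fst_pj snd_pj mulrA.
rewrite (IH (ltnW Hk)).
rewrite [RHS](@split_sum R n _ (P k.+1) (inord k) y0); last first.
  by move=> yb y; rewrite P_upd // (inordK Hk').
rewrite [RHS](eq_bigl (P k)); last by move=> yb; rewrite P_S.
apply: eq_bigr => yb _.
rewrite big_distrr /=; apply: eq_bigr => y _.
rewrite (gmap_st _ _ Hk') (Q_S _ _ Hk') (Q_upd _ _ _ Hkk) (xin_upd _ _ _ (leqnn _)) ffunE eqxx.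
rewrite (st_dep _ (ltnW Hk) (yb' := yb)); first by rewrite mulrA.
by move=> l Hl; rewrite ffunE ord_neq // (inordK Hk').
Qed.

Lemma Sfull k : (k <= n)%N -> forall (wn : WN) (G : {dffun forall i, Z k i} -> R),
  \sum_z chain k wn z * G z = \sum_yb out_prob q enc (unblk wn) yb * G (st k wn yb).
Proof.
move=> Hk wn G; rewrite (S_lem Hk); apply: (T_lem _ (d := n - k)); first by rewrite subnKC.
by move=> yb yb' E; rewrite (st_dep _ Hk E).
Qed.

Lemma out_sum wb : \sum_yb out_prob q enc wb yb = 1.
Proof.
transitivity (\sum_yb out_prob q enc wb yb * 1); first by apply: eq_bigr => yb _; rewrite mulr1.
rewrite -(T_lem _ (d := n) (k := 0)) //.
by rewrite (big_pred1 [ffun=> y0]) ?Q0 ?mulr1 // => yb; rewrite P0.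
Qed.

Lemma chain_ge0 k wn z : 0 <= chain k wn z.
Proof.
elim: k wn z => [|k IH] wn z /=.
  by rewrite !ffunE; apply: prodr_ge0 => i _; rewrite ler0n.
by rewrite !ffunE; apply: mulr_ge0; [exact: IH | exact: (Hq _).1].
Qed.

Lemma chain_chan k : (k <= n)%N -> is_chan (chain k).
Proof.
move=> Hk wn; split; first exact: chain_ge0.
transitivity (\sum_z chain k wn z * 1); first by apply: eq_bigr => z _; rewrite mulr1.
rewrite (Sfull Hk) -[RHS](out_sum (unblk wn)); apply: eq_bigr => yb _; by rewrite mulr1.
Qed.

Definition reblk (wb : {ffun 'I_n -> {dffun forall i, W i}}) : WN :=
  @finfun 'I_m (fun i => blockF n W i) (fun i => blk wb i).

Lemma induced_eq k (Hk : (k < n)%N) (p : {ffun {dffun forall i, W i} -> R}) :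
  induced_dist (block_source p n) (chain k) (@g k) = input_dist p q enc (inord k).
Proof.
apply/ffunP => x; rewrite !ffunE.
rewrite [RHS](reindex (@unblk m W n)); last first.
  exists reblk => [wn _|wb _]; apply/ffunP => i; first by rewrite !ffunE blk_unblk.
  by apply/ffunP => l; rewrite !ffunE.
apply: eq_bigr => wn _.
rewrite (Sfull (ltnW Hk)) big_distrr /=; apply: eq_bigr => yb _.
by rewrite (gmap_st _ _ Hk) /proc_prob !ffunE mulrA.
Qed.

Variable M : 'I_m -> finType.
Variable dec : decoders W Y M n.

Definition rr i : chan R (Z n i) (blockF n M i) :=
  [ffun zi : Z n i => [ffun mi : blockF n M i => ((@dec i (wpart zi) (yblk zi) == mi) : bool)%:R]].

Lemma rrE i zi mi : rr i zi mi = ((@dec i (wpart zi) (yblk zi) == mi) : bool)%:R.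
Proof. by rewrite !ffunE. Qed.

Lemma rr_chan i : is_chan (rr i).
Proof.
move=> zi; split; first by move=> mi; rewrite !ffunE ler0n.
rewrite (bigD1 (@dec i (wpart zi) (yblk zi))) //= !ffunE eqxx big1 ?addr0 //.
by move=> mi Hmi; rewrite !ffunE eq_sym (negbTE Hmi).
Qed.

Lemma post_chanE (A B C : 'I_m -> finType) (k : chan R {dffun forall i, A i} {dffun forall i, B i})
  (r : forall i, chan R (B i) (C i)) x z :
  post_chan k r x z = \sum_y k x y * \prod_i r i (y i) (z i).
Proof. by rewrite !ffunE. Qed.

Lemma code_eq : code_chan q enc dec = post_chan (chain n) rr.
Proof.
apply/ffunP => wn; apply/ffunP => mh; rewrite post_chanE /code_chan ffunE ffunE.
rewrite (Sfull (leqnn n)); apply: eq_bigr => yb _; congr (_ * _).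
under eq_bigr => i _ do rewrite rrE wpart_st.
rewrite prod_nat_bool; congr (_%:R).
have E : forall i, yblk (st n wn yb i) = blk yb i.
  by move=> i; apply/ffunP => l; rewrite yblk_st // ffunE.
congr nat_of_bool.
apply/idP/idP => [/eqP <-|/forallP H].
  by apply/forallP => i; rewrite E ffunE.
apply/eqP/ffunP => i; rewrite ffunE -E; apply/eqP; exact: H.
Qed.

End Main.
Unset Implicit Arguments.
Local Open Scope classical_set_scope.
Lemma bs_dist (R : realType) m (W : 'I_m -> finType) (p : {ffun {dffun forall i, W i} -> R}) n :
  is_dist p -> is_dist (block_source p n).
Proof.
move=> [Hp0 Hp1]; split.
  by move=> wn; rewrite ffunE; apply: prodr_ge0 => k _.
rewrite (reindex (fun wb : {ffun 'I_n -> {dffun forall i, W i}} =>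
   (@finfun 'I_m (fun i => blockF n W i) (fun i => blk wb i)
     : {dffun forall i, blockF n W i}))); last first.
  exists (@unblk m W n) => [wb _|wn _]; apply/ffunP => i; apply/ffunP => l; by rewrite !ffunE.
transitivity (\sum_(wb : {ffun 'I_n -> {dffun forall i, W i}}) \prod_(k < n) p (wb k)).
  apply: eq_bigr => wb _; rewrite ffunE; apply: eq_bigr => k _; congr (p _).
  by apply/ffunP => i; rewrite !ffunE.
rewrite -(bigA_distr_bigA (fun (k : 'I_n) w => p w)) /=.
by rewrite big1 // => k _; rewrite Hp1.
Qed.

Theorem lemma1 (R : realType) (m c : nat) (phi : phi_type R m c)
  (Hnonneg : phi_nonneg phi) (H1 : phi_prop1 phi) (H2 : phi_prop2 phi)
  (H3 : phi_prop3 phi)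
  (W X Y M : 'I_m -> finType)
  (q : chan R {dffun forall i, X i} {dffun forall i, Y i}) (Hq : is_chan q)
  (p : {ffun {dffun forall i, W i} -> R}) (Hp : is_dist p)
  (f : forall i : 'I_m, {dffun forall j, W j} -> M i)
  (Delta : forall i : 'I_m, M i -> M i -> R)
  (HDelta : forall (i : 'I_m) (a : M i), Delta i a a = 0)
  (D : 'I_m -> R) (eps : R) (Heps : 0 < eps)
  (n : nat) (Hn : (0 < n)%N)
  (enc : encoders W X Y n) (Henc : causal enc) (dec : decoders W Y M n)
  (Hdist : forall i : 'I_m,
     exp_distortion p q enc dec f Delta i <= D i + eps)
  (Psi : set {ffun {dffun forall i, X i} -> R}) (HPsi : permissible p q Psi) :
  phi (blockF n W) (blockF n M) (code_chan q enc dec) [set block_source p n]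
    `<=` vscale n%:R (conv_hull (phi X Y q Psi)).
Proof.
move: enc Henc dec Hdist; case: n Hn => [//|n'] _ enc Henc dec _.
have Hbs := @bs_dist R m W p n'.+1 Hp.
case: HPsi => HPd HPin.
have [x0 _] := dist_inhabited (HPd _ (HPin _ enc Henc ord0)).
have [y0 _] := dist_inhabited (Hq x0).
rewrite (code_eq Henc y0 Hq dec).
have Hchain : forall k, (k <= n'.+1)%N -> forall v,
  phi _ _ (chain q enc y0 k) [set block_source p n'.+1] v ->
  exists s : seq 'rV[R]_c, size s = k /\ (forall u, u \in s -> phi X Y q Psi u) /\
     v = \sum_(u <- s) u.
  elim=> [|k IH] Hk v Hv.
    have : [set 0] v by rewrite -(H2 _ _ Hbs).
    move=> E; exists [::]; split; first by [].
    by split; [by [] | rewrite big_nil; exact: E].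
  have Hs := @H1 (blockF n'.+1 W) (Z W Y n' k) X Y (chain q enc y0 k) q
    (@g _ _ _ _ _ enc y0 k) (chain_chan Henc y0 Hq (ltnW Hk)) Hq _ Hbs Psi HPd.
  have Hind : Psi (induced_dist (block_source p n'.+1) (chain q enc y0 k) (@g _ _ _ _ _ enc y0 k)).
    by rewrite (induced_eq Henc y0 Hq Hk); exact: HPin.
  case: (Hs Hind v Hv) => v1 [v2 [Hv1 [Hv2 ->]]].
  have [s [Hsz [Hin ->]]] := IH (ltnW Hk) v1 Hv1.
  exists (v2 :: s); split; first by rewrite /= Hsz.
  split; last by rewrite big_cons addrC.
  by move=> u; rewrite inE => /orP[/eqP->|]; [exact: Hv2 | exact: Hin].
move=> v /(H3 _ _ _ _ _ (chain_chan Henc y0 Hq (leqnn _)) (fun i => rr_chan R y0 dec (i:=i)) _ Hbs) Hv.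
have [s [Hsz [Hin ->]]] := Hchain _ (leqnn _) v Hv.
have Hn0 : ((n'.+1)%:R : R) != 0 by rewrite pnatr_eq0.
exists (\sum_(j < n'.+1) ((n'.+1)%:R^-1 : R) *: s`_j).
  exists n'.+1, (fun _ => (n'.+1)%:R^-1), (fun j => s`_j).
  split; first by move=> j; rewrite invr_ge0 ler0n.
  split; first by rewrite sumr_const card_ord -[_ *+ _]mulr_natr mulVf.
  split; last by [].
  by move=> j; apply: Hin; apply: mem_nth; rewrite Hsz.
rewrite scaler_sumr (eq_bigr (fun j : 'I_n'.+1 => s`_j)); last first.
  by move=> j _; rewrite scalerA mulfV // scale1r.
by rewrite (big_nth 0) Hsz big_mkord.
Qed.
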